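(* For every $u$, the triangle $T=P_1P_2P_3$ is inscribed in $\mathcal{E}$, has centroid $O$ (so $\mathcal{E}$ is its Steiner circumellipse), its three sides are tangent to the ellipse $x^2/a^2+y^2/b^2=1/4$ (its Steiner inellipse), and its area equals $\frac{3\sqrt3}{4}ab$. Hence, as $u$ varies, the triangles $T$ form a Poncelet family of constant area between $\mathcal{E}$ and the caustic $x^2/a^2+y^2/b^2=1/4$. Moreover, $M$ is the Steiner point of $T$.
   Context: Let $a>b>0$. Let $\mathcal{E}$ be the ellipse $x^2/a^2+y^2/b^2=1$ with center $O=(0,0)$, parametrized by $P(t)=(a\cos t,b\sin t)$. Fix $u\in\mathbb{R}$ and let $M=(a\cos u,b\sin u)$. For $i=1,2,3$ let $t_i=-u/3-2\pi(i-1)/3$ and $P_i=P(t_i)$ (the pre-images of the cusps of the negative pedal curve of $\mathcal{E}$ with respect to $M$). The Steiner point of a triangle is the fourth common point (counted with multiplicity) of its circumcircle and its Steiner circumellipse (the ellipse through the vertices centered at the centroid), besides the vertices. *)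

(* Defs.v *)
From Stdlib Require Import Reals Lra.
Open Scope R_scope.

Definition pt := (R * R)%type.

Definition ellP (a b t : R) : pt := (a * cos t, b * sin t).

Definition on_ellipse (a b c : R) (p : pt) : Prop :=
  (fst p)^2 / a^2 + (snd p)^2 / b^2 = c.

Definition t_i (u : R) (i : nat) : R := - u / 3 - 2 * PI * (INR i - 1) / 3.

Definition centroid (A B C : pt) : pt :=
  ((fst A + fst B + fst C) / 3, (snd A + snd B + snd C) / 3).

Definition on_line (P Q X : pt) : Prop :=
  (fst Q - fst P) * (snd X - snd P) - (snd Q - snd P) * (fst X - fst P) = 0.

Definition line_tangent_to_ellipse (a b c : R) (P Q : pt) : Prop :=
  P <> Q /\ exists! X : pt, on_line P Q X /\ on_ellipse a b c X.

Definition tri_area (A B C : pt) : R :=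
  Rabs ((fst B - fst A) * (snd C - snd A) - (snd B - snd A) * (fst C - fst A)) / 2.

Definition circ (D E F : R) (p : pt) : R :=
  (fst p)^2 + (snd p)^2 + D * fst p + E * snd p + F.

(* Standard parametrization of the Steiner circumellipse of ABC
   (the ellipse through A,B,C centred at the centroid G):
   S(t) = G + cos t (A - G) + sin t (B - C)/sqrt 3,
   with S(0) = A, S(2pi/3) = B, S(4pi/3) = C. *)
Definition steiner_param (A B C : pt) (t : R) : pt :=
  let G := centroid A B C in
  (fst G + cos t * (fst A - fst G) + sin t * (fst B - fst C) / sqrt 3,
   snd G + cos t * (snd A - snd G) + sin t * (snd B - snd C) / sqrt 3).

(* M is the Steiner point of ABC: M = S(s) is a point of the Steiner
   circumellipse and, for the circumcircle (any circle through A,B,C),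
   the common points of circle and Steiner ellipse, counted with
   multiplicity, are exactly the parameters 0, 2pi/3, 4pi/3, s (mod 2pi).
   Since t |-> circ(S(t)) is a trigonometric polynomial of degree <= 2,
   "its zeros with multiplicity are s1..s4" means it equals
   k * prod_j sin((t - s_j)/2) with k <> 0. *)
Definition is_steiner_point (A B C M : pt) : Prop :=
  exists s : R, M = steiner_param A B C s /\
    forall D E F : R,
      circ D E F A = 0 -> circ D E F B = 0 -> circ D E F C = 0 ->
      exists k : R, k <> 0 /\
        forall t : R,
          circ D E F (steiner_param A B C t) =
          k * sin (t / 2) * sin ((t - 2 * PI / 3) / 2)
            * sin ((t - 4 * PI / 3) / 2) * sin ((t - s) / 2).

(* Main.v *)
Require Import Defs.
From Stdlib Require Import Reals.
From Stdlib Require Import Lra Nsatz.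
Open Scope R_scope.

Lemma p2 (x : R) : x ^ 2 = x * x. Proof. ring. Qed.
Lemma cs1 (x : R) : cos x * cos x + sin x * sin x = 1.
Proof. pose proof (sin2_cos2 x). unfold Rsqr in H. lra. Qed.
Lemma i2 : 2 * / 2 = 1. Proof. field. Qed.
Lemma i4 : 4 * / 4 = 1. Proof. field. Qed.

Lemma cos2PI3 : cos (2*PI/3) = -/2.
Proof. replace (2*PI/3) with (PI - PI/3) by field.
 rewrite cos_minus, cos_PI, sin_PI, cos_PI3. field. Qed.
Lemma sin2PI3 : sin (2*PI/3) = sqrt 3 / 2.
Proof. replace (2*PI/3) with (PI - PI/3) by field.
 rewrite sin_minus, cos_PI, sin_PI, sin_PI3. field. Qed.
Lemma cos4PI3 : cos (4*PI/3) = -/2.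
Proof. replace (4*PI/3) with (PI + PI/3) by field.
 rewrite cos_plus, cos_PI, sin_PI, cos_PI3. field. Qed.
Lemma sin4PI3 : sin (4*PI/3) = - (sqrt 3 / 2).
Proof. replace (4*PI/3) with (PI + PI/3) by field.
 rewrite sin_plus, cos_PI, sin_PI, sin_PI3. field. Qed.

Lemma onE (a b k x y : R) : a <> 0 -> b <> 0 -> x*x + y*y = k ->
  on_ellipse a b k (a*x, b*y).
Proof. intros. unfold on_ellipse; cbn [fst snd]. rewrite <- H1. field. auto. Qed.

Lemma tang (a b c1 s1 c2 s2 : R) : a <> 0 -> b <> 0 ->
  c1*c1+s1*s1 = 1 -> c2*c2+s2*s2 = 1 -> c1*c2+s1*s2 = -/2 ->
  line_tangent_to_ellipse a b (1/4) (a*c1, b*s1) (a*c2, b*s2).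
Proof.
  intros ha hb h1 h2 h3. split.
  - intro Heq. injection Heq; intros e2 e1.
    apply Rmult_eq_reg_l in e1; auto. apply Rmult_eq_reg_l in e2; auto.
    subst. lra.
  - exists (a*((c1+c2)/2), b*((s1+s2)/2)). split.
    + split.
      * unfold on_line; cbn [fst snd]; field.
      * apply onE; auto. unfold Rdiv. pose proof i2; pose proof i4. nsatz.
    + intros [x y] [Hl He].
      assert (Hx: x = a*(x/a)) by (field; auto).
      assert (Hy: y = b*(y/b)) by (field; auto).
      set (x' := x/a) in Hx. set (y' := y/b) in Hy. clearbody x' y'. subst x y.
      unfold on_line in Hl; cbn [fst snd] in Hl.
      unfold on_ellipse in He; cbn [fst snd] in He.
      assert (He' : x'*x'+y'*y' = 1/4).
      { rewrite <- He. field. auto. }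
      assert (Hl' : (c2-c1)*(y'-s1) - (s2-s1)*(x'-c1) = 0).
      { assert (a*b*((c2-c1)*(y'-s1) - (s2-s1)*(x'-c1)) = 0) by (rewrite <- Hl; field).
        apply Rmult_integral in H. destruct H as [H|H]; auto.
        apply Rmult_integral in H; destruct H; contradiction. }
      assert (Hsq : (x' - (c1+c2)*/2)*(x' - (c1+c2)*/2) + (y' - (s1+s2)*/2)*(y' - (s1+s2)*/2) = 0).
      { pose proof i2; pose proof i4. unfold Rdiv in *. nsatz. }
      destruct (Rplus_sqr_eq_0 _ _ Hsq) as [z1 z2].
      f_equal; f_equal; unfold Rdiv; lra.
Qed.

Lemma cosm2 x : cos (x - 2*PI/3) = (-cos x + sin x * sqrt 3) * /2.
Proof. rewrite cos_minus, cos2PI3, sin2PI3. field. Qed.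
Lemma sinm2 x : sin (x - 2*PI/3) = (-sin x - cos x * sqrt 3) * /2.
Proof. rewrite sin_minus, cos2PI3, sin2PI3. field. Qed.
Lemma cosm4 x : cos (x - 4*PI/3) = (-cos x - sin x * sqrt 3) * /2.
Proof. rewrite cos_minus, cos4PI3, sin4PI3. field. Qed.
Lemma sinm4 x : sin (x - 4*PI/3) = (-sin x + cos x * sqrt 3) * /2.
Proof. rewrite sin_minus, cos4PI3, sin4PI3. field. Qed.

Theorem mainTheorem10 (a b u : R) (hb : 0 < b) (hab : b < a) :
  let M := ellP a b u in
  let P1 := ellP a b (t_i u 1) in
  let P2 := ellP a b (t_i u 2) in
  let P3 := ellP a b (t_i u 3) in
  (* inscribed in E *)
  on_ellipse a b 1 P1 /\ on_ellipse a b 1 P2 /\ on_ellipse a b 1 P3 /\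
  (* centroid O *)
  centroid P1 P2 P3 = (0, 0) /\
  (* hence the Steiner circumellipse of T is E *)
  (forall t : R, on_ellipse a b 1 (steiner_param P1 P2 P3 t)) /\
  (* sides tangent to the Steiner inellipse x^2/a^2 + y^2/b^2 = 1/4 *)
  line_tangent_to_ellipse a b (1/4) P1 P2 /\
  line_tangent_to_ellipse a b (1/4) P2 P3 /\
  line_tangent_to_ellipse a b (1/4) P3 P1 /\
  (* constant area *)
  tri_area P1 P2 P3 = 3 * sqrt 3 / 4 * (a * b) /\
  (* M is the Steiner point of T *)
  is_steiner_point P1 P2 P3 M.
Proof.
  cbv zeta.
  set (th := - u / 3).
  assert (E1 : t_i u 1 = th) by (unfold t_i, th; cbn [INR]; field).
  assert (E2 : t_i u 2 = th - 2*PI/3) by (unfold t_i, th; cbn [INR]; field).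
  assert (E3 : t_i u 3 = th - 4*PI/3) by (unfold t_i, th; cbn [INR]; field).
  assert (ha : a <> 0) by lra. assert (hb' : b <> 0) by lra.
  pose proof (cs1 th) as hc.
  assert (hr : sqrt 3 * sqrt 3 = 3) by (apply sqrt_sqrt; lra).
  assert (hr0 : 0 < sqrt 3) by (apply sqrt_lt_R0; lra).
  pose proof i2 as h2.
  unfold ellP. rewrite E1, E2, E3, cosm2, sinm2, cosm4, sinm4.
  set (c := cos th) in *. set (s := sin th) in *. set (r := sqrt 3) in *.
  assert (SP : forall t, steiner_param (a*c, b*s)
     (a*((-c + s*r) * /2), b*((-s - c*r) * /2))
     (a*((-c - s*r) * /2), b*((-s + c*r) * /2)) t
     = (a*(cos t * c + sin t * s), b*(cos t * s - sin t * c))).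
  { intro t. unfold steiner_param, centroid; cbn [fst snd]. fold r.
    f_equal; field; lra. }
  assert (Hcu : cos (th - u) = c * cos u + s * sin u) by (rewrite cos_minus; reflexivity).
  assert (Hsu : sin (th - u) = s * cos u - c * sin u) by (rewrite sin_minus; reflexivity).
  assert (HT : forall t, sin ((t - (th - u))/2) = sin (t/2) * (c*c - s*s) - cos (t/2) * (2*s*c)).
  { intro t. replace ((t - (th - u))/2) with (t/2 - 2*th) by (unfold th; field).
    rewrite sin_minus, cos_2a, sin_2a. fold c s. ring. }
  pose proof (cs1 u) as hcu.
  assert (HP3 : forall h, sin (h - PI/3) = (sin h - cos h * r) * /2).
  { intro h. rewrite sin_minus, sin_PI3, cos_PI3. unfold r. field. }
  assert (HP23 : forall h, sin (h - 2*PI/3) = (- sin h - cos h * r) * /2).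
  { intro h. rewrite sinm2. unfold r. ring. }
  set (s0 := th - u) in *. set (cu := cos u) in *. set (su := sin u) in *.
  clearbody s0 c s r cu su. clear E1 E2 E3.
  split; [|split; [|split; [|split; [|split; [|split; [|split; [|split; [|split]]]]]]]].
  - apply onE; auto.
  - apply onE; auto. clear -hc hr h2. nsatz.
  - apply onE; auto. clear -hc hr h2. nsatz.
  - unfold centroid; cbn [fst snd]. f_equal; field.
  - intro t. rewrite SP. apply onE; auto. pose proof (cs1 t). clear -hc hr h2 H. nsatz.
  - apply tang; auto; clear -hc hr h2; nsatz.
  - apply tang; auto; clear -hc hr h2; nsatz.
  - apply tang; auto; clear -hc hr h2; nsatz.
  - unfold tri_area; cbn [fst snd].
    assert (Hd : (a * ((- c + s * r) * / 2) - a * c) * (b * ((- s + c * r) * / 2) - b * s) -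
      (b * ((- s - c * r) * / 2) - b * s) * (a * ((- c - s * r) * / 2) - a * c)
      = - (3 * r * a * b * / 2)) by (clear -hc hr h2; nsatz).
    rewrite Hd, Rabs_Ropp, Rabs_pos_eq.
    + field.
    + assert (0 < a) by lra. assert (0 < /2) by lra.
      apply Rlt_le. repeat apply Rmult_lt_0_compat; lra.
  - unfold is_steiner_point. exists s0. split.
    + rewrite SP, Hcu, Hsu. f_equal; clear -hc; nsatz.
    + intros D E F H1 H2 H3. exists (-4*(a*a-b*b)). split.
      { intro Hk. nra. }
      intro t. rewrite SP, HT.
      replace ((t - 2*PI/3)/2) with (t/2 - PI/3) by field.
      replace ((t - 4*PI/3)/2) with (t/2 - 2*PI/3) by field.
      rewrite HP3, HP23.
      replace (cos t) with (cos(t/2)*cos(t/2) - sin(t/2)*sin(t/2))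
        by (rewrite <- cos_2a; f_equal; field).
      replace (sin t) with (2*sin(t/2)*cos(t/2))
        by (rewrite <- sin_2a; f_equal; field).
      pose proof (cs1 (t/2)) as hC.
      set (C := cos (t/2)) in *. set (S := sin (t/2)) in *. clearbody C S.
      unfold circ in *; cbn [fst snd] in *. rewrite !p2 in *.
      assert (hF : 2*F = -(a*a+b*b)) by (clear -hc hr h2 H1 H2 H3; nsatz).
      assert (hD : 2*D*a = -(a*a-b*b)*(4*c*c*c-3*c)) by (clear -hc hr h2 H1 H2 H3; nsatz).
      assert (hE : 2*E*b = -(a*a-b*b)*(3*s-4*s*s*s)) by (clear -hc hr h2 H1 H2 H3; nsatz).
      clear -hc hr h2 hC hF hD hE. nsatz.
Qed.
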